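(* Let $N\ge 4$ be even and let $P_1,\dots,P_N$ be an $N$-periodic billiard trajectory in $E$. For $j=1,2$ let $\bar Q_{j,i}$ be the foot of the perpendicular from $f_j$ to the line $P_iP_{i+1}$, and let $\bar A_j$ be the signed area of the polygon $\bar Q_{j,1},\dots,\bar Q_{j,N}$. Then $\bar A_1=\bar A_2$, i.e. $\bar A_1/\bar A_2=1$.
   Context: Let $E$ be the ellipse $x^2/a^2+y^2/b^2=1$ with $a>b>0$, center $O=(0,0)$ and foci $f_1=(-\sqrt{a^2-b^2},0)$, $f_2=(\sqrt{a^2-b^2},0)$. An $N$-periodic billiard trajectory is a convex polygon with vertices $P_1,\dots,P_N\in E$ (indices mod $N$), listed counterclockwise and winding once around $O$, with $P_i\neq P_{i+1}$, such that at every vertex $P_i$ the normal line to $E$ at $P_i$ bisects the angle $\angle P_{i-1}P_iP_{i+1}$, and all of whose sides are tangent to a common ellipse confocal with $E$. The signed area of a polygon with vertices $W_i=(x_i,y_i)$, $i=1,\dots,N$ (indices mod $N$), is $S=\tfrac12\sum_{i=1}^N (x_iy_{i+1}-x_{i+1}y_i)$. *)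

(* Defs.v *)
From Stdlib Require Import Reals Lra Lia.
Open Scope R_scope.

Definition pt := (R * R)%type.

Definition padd (p q : pt) : pt := (fst p + fst q, snd p + snd q).
Definition psub (p q : pt) : pt := (fst p - fst q, snd p - snd q).
Definition pscale (s : R) (p : pt) : pt := (s * fst p, s * snd p).
Definition dot (p q : pt) : R := fst p * fst q + snd p * snd q.
Definition cross (p q : pt) : R := fst p * snd q - snd p * fst q.
Definition pnorm (p : pt) : R := sqrt (dot p p).

Definition on_ellipse (a b : R) (p : pt) : Prop :=
  (fst p) ^ 2 / a ^ 2 + (snd p) ^ 2 / b ^ 2 = 1.

Definition focus1 (a b : R) : pt := (- sqrt (a ^ 2 - b ^ 2), 0).
Definition focus2 (a b : R) : pt := (sqrt (a ^ 2 - b ^ 2), 0).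

Definition ell_normal (a b : R) (p : pt) : pt := (fst p / a ^ 2, snd p / b ^ 2).

Definition on_line (p q x : pt) : Prop := exists s : R, x = padd p (pscale s (psub q p)).

Definition line_tangent_ellipse (a' b' : R) (p q : pt) : Prop :=
  exists x : pt, on_line p q x /\ on_ellipse a' b' x /\
    forall y : pt, on_line p q y -> on_ellipse a' b' y -> y = x.

Definition confocal_ellipse (a b a' b' : R) : Prop :=
  0 < b' /\ b' < a' /\ a' ^ 2 - b' ^ 2 = a ^ 2 - b ^ 2.

(* The normal line at P_i bisects the angle P_{i-1} P_i P_{i+1}:
   the internal bisector direction u/|u| + v/|v| lies on the normal line. *)
Definition normal_bisects (a b : R) (pprev p pnext : pt) : Prop :=
  let u := psub pprev p in
  let v := psub pnext p in
  cross (padd (pscale (/ pnorm u) u) (pscale (/ pnorm v) v)) (ell_normal a b p) = 0.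

(* Vertices P 0, ..., P (N-1), extended N-periodically to all of nat. *)
Definition periodic (N : nat) (P : nat -> pt) : Prop := forall i, P (i + N)%nat = P i.

(* Convex polygon, listed counterclockwise, winding once around O, with
   vertices on E: the vertices are (a cos t_i, b sin t_i) with
   t_0 < t_1 < ... < t_{N-1} < t_0 + 2 pi; moreover every turn is a left turn. *)
Definition ccw_convex_once (a b : R) (N : nat) (P : nat -> pt) : Prop :=
  (exists t : nat -> R,
     (forall i, (i + 1 < N)%nat -> t i < t (S i)) /\
     t (N - 1)%nat < t 0%nat + 2 * PI /\
     (forall i, (i < N)%nat -> P i = (a * cos (t i), b * sin (t i)))) /\
  (forall i, 0 < cross (psub (P (S i)) (P i)) (psub (P (S (S i))) (P (S i)))).

(* N-periodic billiard trajectory in E (indices 0..N-1 instead of 1..N). *)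
Definition billiard_Nperiodic (a b : R) (N : nat) (P : nat -> pt) : Prop :=
  periodic N P /\
  (forall i, on_ellipse a b (P i)) /\
  ccw_convex_once a b N P /\
  (forall i, P i <> P (S i)) /\
  (forall i, normal_bisects a b (P i) (P (S i)) (P (S (S i)))) /\
  (exists a' b', confocal_ellipse a b a' b' /\
     forall i, line_tangent_ellipse a' b' (P i) (P (S i))).

Definition foot (f p q : pt) : pt :=
  let d := psub q p in padd p (pscale (dot (psub f p) d / dot d d) d).

Fixpoint sumR (n : nat) (g : nat -> R) : R :=
  match n with O => 0 | S m => sumR m g + g m end.

Definition signed_area (N : nat) (W : nat -> pt) : R :=
  / 2 * sumR N (fun i => fst (W i) * snd (W (Nat.modulo (S i) N))
                          - fst (W (Nat.modulo (S i) N)) * snd (W i)).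

Definition pedal (f : pt) (P : nat -> pt) : nat -> pt := fun i => foot f (P i) (P (S i)).

(* Main.v *)
Require Import Defs.
From Stdlib Require Import Reals Lra Lia.
Open Scope R_scope.

Definition pneg (p : pt) : pt := (- fst p, - snd p).
Definition ell (P Q z : pt) : R := cross (psub Q P) (psub z P).
Definition qf (a b : R) (z : pt) : R := fst z ^ 2 / a ^ 2 + snd z ^ 2 / b ^ 2.
Definition ee (a b u : R) : pt := (a * cos u, b * sin u).
Definition lp (P Q : pt) (s : R) : pt := padd P (pscale s (psub Q P)).

Lemma ell_lp P Q A B s : ell P Q (lp A B s) = (1 - s) * ell P Q A + s * ell P Q B.
Proof. destruct P, Q, A, B; unfold ell, lp, cross, psub, padd, pscale; simpl; ring. Qed.

Lemma qf_lp a b A B s : qf a b (lp A B s) =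
  (1 - s) * qf a b A + s * qf a b B - s * (1 - s) * qf a b (psub B A).
Proof. destruct A, B; unfold qf, lp, psub, padd, pscale; simpl; unfold Rdiv; ring. Qed.

Lemma sq_div_ge a x : 0 < a -> 0 <= x ^ 2 / a ^ 2.
Proof. intros. replace (x^2/a^2) with ((x/a)^2) by (field; lra). nra. Qed.

Lemma sq_div_gt a x : 0 < a -> x <> 0 -> 0 < x ^ 2 / a ^ 2.
Proof. intros. replace (x^2/a^2) with ((x/a)^2) by (field; lra).
  assert (x / a <> 0). { intro H1. apply H0. apply (Rmult_eq_reg_r (/a)). unfold Rdiv in H1. lra.
   apply Rinv_neq_0_compat; lra. }
  assert (0 < (x/a)*(x/a)) by (apply Rsqr_pos_lt; auto). nra. Qed.

Lemma qf_pos a b z : 0 < a -> 0 < b -> z <> (0,0) -> 0 < qf a b z.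
Proof. destruct z as [x y]; unfold qf; cbn [fst snd]; intros.
  destruct (Req_dec x 0).
  - subst. assert (y <> 0) by (intro; subst; auto).
    pose proof (sq_div_ge a 0 H). pose proof (sq_div_gt b y H0 H2). lra.
  - pose proof (sq_div_gt a x H H2). pose proof (sq_div_ge b y H0). lra.
Qed.

Lemma psub_nz P Q : P <> Q -> psub Q P <> (0,0).
Proof. destruct P, Q; unfold psub; simpl; intros H E. inversion E. apply H. f_equal; lra. Qed.

Lemma lp_inj P Q s1 s2 : P <> Q -> lp P Q s1 = lp P Q s2 -> s1 = s2.
Proof. destruct P as [p1 p2], Q as [q1 q2]; unfold lp, padd, pscale, psub; simpl; intros H E.
  inversion E. destruct (Req_dec s1 s2); auto. exfalso. apply H.
  assert (q1 - p1 = 0). { apply (Rmult_eq_reg_l (s1 - s2)). lra. lra. }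
  assert (q2 - p2 = 0). { apply (Rmult_eq_reg_l (s1 - s2)). lra. lra. }
  f_equal; lra. Qed.

Lemma tangent_outside a' b' P Q : 0 < a' -> 0 < b' -> P <> Q -> line_tangent_ellipse a' b' P Q ->
  exists s0, qf a' b' (lp P Q s0) = 1 /\ forall s, 1 <= qf a' b' (lp P Q s).
Proof.
  intros ha hb hPQ [X [[s0 HX] [HXC Hu]]].
  pose proof (qf_pos a' b' _ ha hb (psub_nz _ _ hPQ)) as hD.
  set (D := psub Q P) in *.
  set (B := fst (lp P Q s0) * fst D / a'^2 + snd (lp P Q s0) * snd D / b'^2).
  assert (Hid : forall s, qf a' b' (lp P Q s) = qf a' b' (lp P Q s0) + 2 * (s - s0) * B + (s - s0)^2 * qf a' b' D).
  { intro s. unfold B, D, qf, lp, padd, pscale, psub. destruct P, Q; simpl. unfold Rdiv. ring. }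
  assert (HX1 : qf a' b' (lp P Q s0) = 1) by (subst X; exact HXC).
  assert (HB : B = 0).
  { destruct (Req_dec B 0) as [|nB]; auto. exfalso.
    set (s1 := s0 - 2 * B / qf a' b' D).
    assert (E1 : qf a' b' (lp P Q s1) = 1).
    { rewrite Hid, HX1. unfold s1. field. lra. }
    assert (E2 : lp P Q s1 = X). { apply Hu. exists s1. reflexivity. exact E1. }
    rewrite HX in E2. apply lp_inj in E2; auto. unfold s1 in E2.
    apply nB. assert (2 * B / qf a' b' D = 0) by lra.
    apply (Rmult_eq_reg_r (2 / qf a' b' D)). rewrite Rmult_0_l. rewrite <- H. field. lra.
    apply Rmult_integral_contrapositive. split. lra. apply Rinv_neq_0_compat. lra. }
  exists s0. split. exact HX1. intro s. rewrite Hid, HX1, HB.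
  assert (0 <= (s - s0)^2) by apply pow2_ge_0. assert (0 <= (s - s0)^2 * qf a' b' D) by (apply Rmult_le_pos; lra). lra.
Qed.

Lemma dot_pos D : D <> (0,0) -> 0 < dot D D.
Proof. destruct D as [x y]; unfold dot; cbn [fst snd]; intros H.
  destruct (Req_dec x 0). subst. assert (y <> 0) by (intro; subst; auto).
  assert (0 < y*y) by (apply Rsqr_pos_lt; auto). lra.
  assert (0 < x*x) by (apply Rsqr_pos_lt; auto). nra. Qed.

Lemma line_of_ell P Q W : P <> Q -> ell P Q W = 0 ->
  W = lp P Q (dot (psub W P) (psub Q P) / dot (psub Q P) (psub Q P)).
Proof. intros H E. pose proof (dot_pos _ (psub_nz _ _ H)) as Hd.
  destruct P as [p1 p2], Q as [q1 q2], W as [w1 w2].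
  unfold ell, cross, lp, padd, pscale, psub, dot in *; cbn [fst snd] in *.
  set (d1 := q1 - p1) in *. set (d2 := q2 - p2) in *.
  set (v1 := w1 - p1) in *. set (v2 := w2 - p2) in *.
  set (den := d1 * d1 + d2 * d2) in *.
  assert (A1 : (v1 * d1 + v2 * d2) * d1 = v1 * den).
  { unfold den. replace ((v1 * d1 + v2 * d2) * d1) with (v1*d1*d1 + d2 * (d1 * v2)) by ring.
    replace (d1 * v2) with (d2 * v1) by lra. ring. }
  assert (A2 : (v1 * d1 + v2 * d2) * d2 = v2 * den).
  { unfold den. replace ((v1 * d1 + v2 * d2) * d2) with (v2*d2*d2 + d1 * (d2 * v1)) by ring.
    replace (d2 * v1) with (d1 * v2) by lra. ring. }
  f_equal.
  - replace ((v1 * d1 + v2 * d2) / den * d1) with (v1 * den / den) by (unfold Rdiv; rewrite <- A1; ring).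
    unfold v1. field. lra.
  - replace ((v1 * d1 + v2 * d2) / den * d2) with (v2 * den / den) by (unfold Rdiv; rewrite <- A2; ring).
    unfold v2. field. lra.
Qed.

Lemma one_side a' b' P Q : 0 < a' -> 0 < b' -> P <> Q -> (forall s, 1 <= qf a' b' (lp P Q s)) ->
  forall Z1 Z2, qf a' b' Z1 = 1 -> qf a' b' Z2 = 1 -> 0 < ell P Q Z1 -> ell P Q Z2 < 0 -> False.
Proof.
  intros ha hb hPQ Hout Z1 Z2 H1 H2 L1 L2.
  set (l := - ell P Q Z2 / (ell P Q Z1 - ell P Q Z2)).
  assert (Hl0 : 0 < l). { unfold l, Rdiv. apply Rmult_lt_0_compat. lra. apply Rinv_0_lt_compat. lra. }
  assert (Hl1 : l < 1). { unfold l. apply (Rmult_lt_reg_r (ell P Q Z1 - ell P Q Z2)). lra.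
    unfold Rdiv. rewrite Rmult_assoc, Rinv_l. lra. lra. }
  assert (EW : ell P Q (lp Z2 Z1 l) = 0). { rewrite ell_lp. unfold l. field. lra. }
  assert (Hne : Z1 <> Z2). { intro; subst; lra. }
  pose proof (qf_pos a' b' _ ha hb (psub_nz _ _ (not_eq_sym Hne))) as hq.
  pose proof (qf_lp a' b' Z2 Z1 l) as Hq. rewrite H1, H2 in Hq.
  pose proof (line_of_ell _ _ _ hPQ EW) as HW.
  pose proof (Hout (dot (psub (lp Z2 Z1 l) P) (psub Q P) / dot (psub Q P) (psub Q P))) as Ho.
  rewrite <- HW in Ho.
  assert (0 < l * (1 - l) * qf a' b' (psub Z1 Z2)).
  { apply Rmult_lt_0_compat; auto. apply Rmult_lt_0_compat; lra. }
  lra.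
Qed.

Lemma trig3 A B : sin (2*A) + sin (2*B) - sin (2*(A+B)) = 4 * sin A * sin B * sin (A + B).
Proof.
  rewrite !sin_2a, sin_plus, cos_plus.
  pose proof (sin2_cos2 A) as HA. pose proof (sin2_cos2 B) as HB. unfold Rsqr in *.
  transitivity (4 * sin A * sin B * (sin A * cos B + cos A * sin B)
     + 2 * sin A * cos A * (1 - cos B * cos B - sin B * sin B) + 2 * sin B * cos B * (1 - sin A * sin A - cos A * cos A)).
  ring. rewrite !Rminus_def. replace (1 + - (cos B * cos B) + - (sin B * sin B)) with 0 by lra.
  replace (1 + - (sin A * sin A) + - (cos A * cos A)) with 0 by lra. ring.
Qed.

Lemma ell_ee a b x x' u : ell (ee a b x) (ee a b x') (ee a b u) =
  4 * a * b * sin ((x' - x)/2) * sin ((u - x')/2) * sin ((u - x)/2).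
Proof.
  transitivity (a * b * (sin (2*((u - x')/2)) + sin (2*((x' - x)/2)) - sin (2*((u - x')/2 + (x'-x)/2)))).
  - replace (2*((u - x')/2)) with (u - x') by field.
    replace (2*((x' - x)/2)) with (x' - x) by field.
    replace (2*((u - x')/2 + (x'-x)/2)) with (u - x) by field.
    unfold ell, ee, cross, psub; cbn [fst snd]. rewrite !sin_minus. ring.
  - rewrite trig3. replace ((u - x') / 2 + (x' - x) / 2) with ((u-x)/2) by field. ring.
Qed.

Lemma ell_ee_neg a b x x' u : 0 < a -> 0 < b -> 0 < x' - x < 2*PI -> x <= u <= x' -> (x < u < x') ->
  ell (ee a b x) (ee a b x') (ee a b u) < 0.
Proof. intros ha hb [h1 h2] _ [h3 h4]. rewrite ell_ee.
  assert (0 < sin ((x'-x)/2)) by (apply sin_gt_0; lra).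
  assert (0 < sin ((u-x)/2)) by (apply sin_gt_0; lra).
  assert (0 < sin (-((u-x')/2))) by (apply sin_gt_0; lra). rewrite sin_neg in H1.
  assert (0 < 4*a*b*sin ((x'-x)/2) * sin ((u-x)/2)).
  { repeat apply Rmult_lt_0_compat; lra. }
  nra.
Qed.

Lemma ell_ee_nonpos a b x x' u : 0 < a -> 0 < b -> 0 < x' - x < 2*PI -> x <= u <= x' ->
  ell (ee a b x) (ee a b x') (ee a b u) <= 0.
Proof. intros ha hb [h1 h2] [h3 h4]. rewrite ell_ee.
  assert (0 < sin ((x'-x)/2)) by (apply sin_gt_0; lra).
  assert (0 <= sin ((u-x)/2)) by (apply sin_ge_0; lra).
  assert (0 <= sin (-((u-x')/2))) by (apply sin_ge_0; lra). rewrite sin_neg in H1.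
  assert (0 < 4*a*b*sin ((x'-x)/2)).
  { repeat apply Rmult_lt_0_compat; lra. }
  assert (0 <= 4*a*b*sin ((x'-x)/2) * sin ((u-x)/2)) by (apply Rmult_le_pos; lra).
  nra.
Qed.

Lemma ell_ee_pos a b x x' u : 0 < a -> 0 < b -> 0 < x' - x < 2*PI -> x' < u < x + 2*PI ->
  0 < ell (ee a b x) (ee a b x') (ee a b u).
Proof. intros ha hb [h1 h2] [h3 h4]. rewrite ell_ee.
  assert (0 < sin ((x'-x)/2)) by (apply sin_gt_0; lra).
  assert (0 < sin ((u-x)/2)) by (apply sin_gt_0; lra).
  assert (0 < sin ((u-x')/2)) by (apply sin_gt_0; lra).
  repeat apply Rmult_lt_0_compat; lra.
Qed.

Lemma find_idx (f : nat -> R) v m : (forall k, f k < f (S k)) -> f 0%nat <= v -> v < f m ->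
  exists j, f j <= v < f (S j).
Proof. intros Hf H0. induction m; intros Hm. lra.
  destruct (Rlt_or_le v (f m)). apply IHm; auto. exists m. lra. Qed.

Lemma mono_lt (T : nat -> R) : (forall k, T k < T (S k)) -> forall i j, (i < j)%nat -> T i < T j.
Proof. intros H i j Hij. induction Hij. apply H. specialize (H m). lra. Qed.

Lemma mono_le (T : nat -> R) : (forall k, T k < T (S k)) -> forall i j, (i <= j)%nat -> T i <= T j.
Proof. intros H i j Hij. destruct (Nat.eq_dec i j). subst; lra.
  left. apply mono_lt; auto. lia. Qed.

Lemma orbit (Gd Tn : R -> R -> Prop)
  (core : forall x x' y y', Gd x x' -> Tn y y' -> x <= y -> y < y' -> y' <= x' -> y = x /\ y' = x')
  (T : nat -> R) N h : N = (2*h)%nat -> (1 <= h)%nat ->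
  (forall k, T k < T (S k)) -> (forall k, T (k + N)%nat = T k + 2*PI) ->
  (forall k, Gd (T k) (T (S k)) /\ Tn (T k) (T (S k))) ->
  (forall k, Gd (T (k+h)%nat - PI) (T (S k + h)%nat - PI) /\ Tn (T (k+h)%nat - PI) (T (S k + h)%nat - PI)) ->
  forall k, T (k + h)%nat = T k + PI.
Proof.
  intros HN Hh Hinc Hper HA HB.
  set (Sf := fun m => T (m + h)%nat - PI).
  assert (HBS : forall k, Gd (Sf k) (Sf (S k)) /\ Tn (Sf k) (Sf (S k))) by (intro; apply HB).
  assert (HP : forall m k, m = (k + N)%nat -> T m = T k + 2*PI) by (intros; subst; apply Hper).
  assert (ML := mono_lt T Hinc). assert (MLe := mono_le T Hinc).
  assert (SInc : forall m, Sf m < Sf (S m)). { intro m; unfold Sf. specialize (Hinc (m+h)%nat). simpl. lra. }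
  assert (HS : forall m, Sf m = T (m+h)%nat - PI) by reflexivity.
  clearbody Sf.
  destruct (find_idx T (Sf N) (2*N)%nat Hinc) as [j Hj].
  { rewrite HS. rewrite (HP (N+h)%nat h) by lia.
    assert (T 0%nat <= T h) by (apply MLe; lia). pose proof PI_RGT_0. lra. }
  { rewrite HS. assert (T (N+h)%nat < T (2*N)%nat) by (apply ML; lia). pose proof PI_RGT_0. lra. }
  assert (I : forall k, T (j+k)%nat <= Sf (N+k)%nat < T (S (j+k))).
  { induction k. rewrite !Nat.add_0_r. exact Hj.
    rewrite !Nat.add_succ_r. destruct IHk as [I1 I2]. split.
    - destruct (Rlt_or_le (Sf (S (N+k))) (T (S (j+k)))) as [C|C]; auto.
      exfalso. destruct (HA (j+k)%nat) as [G _]. destruct (HBS (N+k)%nat) as [_ Tn1].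
      destruct (core _ _ _ _ G Tn1) as [_ E]; try apply SInc; lra.
    - destruct (Rlt_or_le (Sf (S (N+k))) (T (S (S (j+k))))) as [C|C]; auto.
      exfalso. destruct (HA (S (j+k))) as [_ Tn1]. destruct (HBS (N+k)%nat) as [G _].
      destruct (core _ _ _ _ G Tn1) as [E _]; try apply Hinc; lra. }
  pose proof PI_RGT_0.
  assert (E2 : forall k, T (k + (2*N))%nat = T k + 4*PI).
  { intro k. rewrite (HP (k + 2*N)%nat (k+N)%nat) by lia. rewrite Hper. lra. }
  destruct (Nat.lt_total j N) as [Hlt|[Heq|Hgt]].
  - exfalso. destruct (I 0%nat) as [_ A1]. destruct (I h) as [_ A2]. rewrite HS in A1, A2.
    assert (T (S (j+0)) <= T N) by (apply MLe; lia).
    assert (T (S (j+h)) <= T (N+h)%nat) by (apply MLe; lia).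
    rewrite (HP (N+0+h)%nat h) in A1 by lia. rewrite (HP N 0%nat) in H0 by lia.
    rewrite (HP (N+h)%nat h) in H1 by lia.
    replace (N + h + h)%nat with (0 + 2*N)%nat in A2 by lia. rewrite E2 in A2. lra.
  - subst j. intro k. destruct (I k) as [A1 _]. destruct (I (k+h)%nat) as [A2 _]. rewrite HS in A1, A2.
    rewrite (HP (N+k)%nat k) in A1 by lia. rewrite (HP (N+k+h)%nat (k+h)%nat) in A1 by lia.
    rewrite (HP (N+(k+h))%nat (k+h)%nat) in A2 by lia.
    replace (N + (k + h) + h)%nat with (k + 2*N)%nat in A2 by lia. rewrite E2 in A2. lra.
  - exfalso. destruct (I 0%nat) as [A1 _]. destruct (I h) as [A2 _]. rewrite HS in A1, A2.
    assert (T N < T (j+0)%nat) by (apply ML; lia).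
    assert (T (N+h)%nat < T (j+h)%nat) by (apply ML; lia).
    rewrite (HP (N+0+h)%nat h) in A1 by lia. rewrite (HP N 0%nat) in H0 by lia.
    rewrite (HP (N+h)%nat h) in H1 by lia.
    replace (N + h + h)%nat with (0 + 2*N)%nat in A2 by lia. rewrite E2 in A2. lra.
Qed.

Definition Good a b a' b' x x' := 0 < x' - x < 2*PI /\
  forall Z, qf a' b' Z = 1 -> 0 <= ell (ee a b x) (ee a b x') Z.
Definition Tan a b a' b' y y' := exists s, 0 < s < 1 /\ qf a' b' (lp (ee a b y) (ee a b y') s) = 1.

Lemma core a b a' b' x x' y y' : 0 < a -> 0 < b -> Good a b a' b' x x' -> Tan a b a' b' y y' ->
  x <= y -> y < y' -> y' <= x' -> y = x /\ y' = x'.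
Proof.
  intros ha hb [Hx HG] [s [Hs HT]] H1 H2 H3.
  pose proof (HG _ HT) as HZ. rewrite ell_lp in HZ.
  assert (A1 : ell (ee a b x) (ee a b x') (ee a b y) <= 0) by (apply ell_ee_nonpos; lra).
  assert (A2 : ell (ee a b x) (ee a b x') (ee a b y') <= 0) by (apply ell_ee_nonpos; lra).
  destruct (Req_dec y x) as [E1|E1]; destruct (Req_dec y' x') as [E2|E2]; auto; exfalso.
  - assert (ell (ee a b x) (ee a b x') (ee a b y') < 0) by (apply ell_ee_neg; lra).
    assert (0 <= (1-s) * (- ell (ee a b x) (ee a b x') (ee a b y))) by (apply Rmult_le_pos; lra).
    assert (0 < s * (- ell (ee a b x) (ee a b x') (ee a b y'))) by (apply Rmult_lt_0_compat; lra). lra.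
  - assert (ell (ee a b x) (ee a b x') (ee a b y) < 0) by (apply ell_ee_neg; lra).
    assert (0 < (1-s) * (- ell (ee a b x) (ee a b x') (ee a b y))) by (apply Rmult_lt_0_compat; lra).
    assert (0 <= s * (- ell (ee a b x) (ee a b x') (ee a b y'))) by (apply Rmult_le_pos; lra). lra.
  - assert (ell (ee a b x) (ee a b x') (ee a b y) < 0) by (apply ell_ee_neg; lra).
    assert (0 < (1-s) * (- ell (ee a b x) (ee a b x') (ee a b y))) by (apply Rmult_lt_0_compat; lra).
    assert (0 <= s * (- ell (ee a b x) (ee a b x') (ee a b y'))) by (apply Rmult_le_pos; lra). lra.
Qed.

Lemma ee_mPI a b x : ee a b (x - PI) = pneg (ee a b x).
Proof. unfold ee, pneg; cbn [fst snd]. rewrite cos_minus, sin_minus, cos_PI, sin_PI. f_equal; ring. Qed.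

Lemma ee_pPI a b x : ee a b (x + PI) = pneg (ee a b x).
Proof. unfold ee, pneg; cbn [fst snd]. rewrite neg_cos, neg_sin. f_equal; ring. Qed.

Lemma ell_neg A B Z : ell (pneg A) (pneg B) Z = ell A B (pneg Z).
Proof. destruct A, B, Z; unfold ell, pneg, cross, psub; cbn [fst snd]; ring. Qed.

Lemma qf_neg a b Z : qf a b (pneg Z) = qf a b Z.
Proof. destruct Z; unfold qf, pneg; cbn [fst snd]; unfold Rdiv; ring. Qed.

Lemma lp_neg A B s : lp (pneg A) (pneg B) s = pneg (lp A B s).
Proof. destruct A, B; unfold lp, pneg, padd, pscale, psub; cbn [fst snd]; f_equal; ring. Qed.

Lemma Good_sym a b a' b' x x' : Good a b a' b' x x' -> Good a b a' b' (x - PI) (x' - PI).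
Proof. intros [H1 H2]. split. lra. intros Z HZ. rewrite !ee_mPI, ell_neg. apply H2. rewrite qf_neg; auto. Qed.

Lemma Tan_sym a b a' b' x x' : Tan a b a' b' x x' -> Tan a b a' b' (x - PI) (x' - PI).
Proof. intros [s [H1 H2]]. exists s. split; auto. rewrite !ee_mPI, lp_neg, qf_neg; auto. Qed.

Lemma div_le c d x : 0 < c -> c <= d -> x ^ 2 / d <= x ^ 2 / c.
Proof. intros. unfold Rdiv. apply Rmult_le_compat_l. apply pow2_ge_0. apply Rinv_le_contravar; lra. Qed.

Lemma div_lt c d x : 0 < c -> c < d -> x <> 0 -> x ^ 2 / d < x ^ 2 / c.
Proof. intros. unfold Rdiv. apply Rmult_lt_compat_l.
  assert (0 < x*x) by (apply Rsqr_pos_lt; auto). nra. apply Rinv_lt_contravar; nra. Qed.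

Lemma inner a b a' b' X : 0 < a' -> 0 < b' -> a' ^ 2 < a ^ 2 -> b' ^ 2 < b ^ 2 ->
  qf a' b' X = 1 -> qf a b X < 1.
Proof. destruct X as [x y]; unfold qf; cbn [fst snd]; intros ha hb H1 H2 H.
  assert (0 < a'^2) by nra. assert (0 < b'^2) by nra.
  destruct (Req_dec x 0) as [Hx|Hx].
  - subst. assert (Hy : y <> 0) by (intro; subst; unfold Rdiv in H; lra).
    pose proof (div_le _ _ 0 H0 (Rlt_le _ _ H1)). pose proof (div_lt _ _ y H3 H2 Hy). lra.
  - pose proof (div_lt _ _ x H0 H1 Hx). pose proof (div_le _ _ y H3 (Rlt_le _ _ H2)). lra.
Qed.

Lemma sumR_ext n f g : (forall i, (i < n)%nat -> f i = g i) -> sumR n f = sumR n g.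
Proof. induction n; intros H; simpl; auto. rewrite IHn, H; auto. Qed.

Lemma sumR_S n F : sumR n (fun i => F (S i)) + F 0%nat = sumR n F + F n.
Proof. induction n; simpl; [ring|]. lra. Qed.

Lemma sumR_shift N F : (forall i, F (i + N)%nat = F i) -> forall m, sumR N (fun i => F (i + m)%nat) = sumR N F.
Proof. intros HF m. induction m.
  - apply sumR_ext. intros. rewrite Nat.add_0_r. auto.
  - rewrite <- IHm. set (G := fun i => F (i + m)%nat).
    transitivity (sumR N (fun i => G (S i))). apply sumR_ext. intros. unfold G. f_equal. lia.
    pose proof (sumR_S N G). assert (G N = G 0%nat). { unfold G. simpl. rewrite <- (HF m). f_equal. lia. }
    unfold G in *. lra.
Qed.

Lemma per_mod (W : nat -> pt) N : (N <> 0)%nat -> (forall i, W (i + N)%nat = W i) -> forall k, W (k mod N) = W k.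
Proof. intros HN HW k. rewrite (Nat.div_mod_eq k N) at 2. generalize (k / N)%nat. intro q.
  induction q. rewrite Nat.mul_0_r, Nat.add_0_l. auto.
  replace (N * S q + k mod N)%nat with ((N * q + k mod N) + N)%nat by lia. rewrite HW. auto. Qed.

Lemma foot_neg f p q : foot (pneg f) (pneg p) (pneg q) = pneg (foot f p q).
Proof. destruct f as [f1 f2], p as [p1 p2], q as [q1 q2].
  unfold foot, pneg, padd, pscale, psub, dot; cbn [fst snd].
  replace ((- f1 - - p1) * (- q1 - - p1) + (- f2 - - p2) * (- q2 - - p2)) with
    ((f1 - p1) * (q1 - p1) + (f2 - p2) * (q2 - p2)) by ring.
  replace ((- q1 - - p1) * (- q1 - - p1) + (- q2 - - p2) * (- q2 - - p2)) with
    ((q1 - p1) * (q1 - p1) + (q2 - p2) * (q2 - p2)) by ring.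
  f_equal; ring.
Qed.

Definition Fw (W : nat -> pt) (i : nat) : R := fst (W i) * snd (W (S i)) - fst (W (S i)) * snd (W i).

Lemma area_sym a b N h P : N = (2*h)%nat -> (1 <= h)%nat -> periodic N P ->
  (forall k, P (k + h)%nat = pneg (P k)) ->
  signed_area N (pedal (focus1 a b) P) = signed_area N (pedal (focus2 a b) P).
Proof.
  intros HN Hh Hper Hs.
  assert (HN0 : (N <> 0)%nat) by lia.
  assert (Wper : forall f i, pedal f P (i + N)%nat = pedal f P i).
  { intros f i. unfold pedal. rewrite Hper. replace (S (i + N)) with (S i + N)%nat by lia. rewrite Hper. auto. }
  assert (SA : forall f, signed_area N (pedal f P) = / 2 * sumR N (Fw (pedal f P))).
  { intro f. unfold signed_area. f_equal. apply sumR_ext. intros i _. unfold Fw.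
    rewrite (per_mod (pedal f P) N HN0 (Wper f)). auto. }
  assert (F1 : focus1 a b = pneg (focus2 a b)). { unfold focus1, focus2, pneg; cbn [fst snd]. f_equal. ring. }
  assert (Wsym : forall k, pedal (focus1 a b) P (k + h)%nat = pneg (pedal (focus2 a b) P k)).
  { intro k. unfold pedal. rewrite F1, Hs. replace (S (k + h)) with (S k + h)%nat by lia. rewrite Hs.
    apply foot_neg. }
  rewrite !SA. f_equal.
  rewrite <- (sumR_shift N (Fw (pedal (focus1 a b) P))) with (m := h).
  - apply sumR_ext. intros i _. unfold Fw. rewrite Wsym. replace (S (i + h)) with (S i + h)%nat by lia.
    rewrite Wsym. unfold pneg; cbn [fst snd]. ring.
  - intro i. unfold Fw. rewrite Wper. replace (S (i + N)) with (S i + N)%nat by lia. rewrite Wper. auto.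
Qed.

Lemma ell_end P Q : ell P Q Q = 0.
Proof. destruct P, Q; unfold ell, cross, psub; cbn [fst snd]; ring. Qed.

Theorem mainTheorem2 (a b : R) (N : nat) (P : nat -> pt) :
  0 < b -> b < a ->
  (4 <= N)%nat -> Nat.Even N ->
  billiard_Nperiodic a b N P ->
  signed_area N (pedal (focus1 a b) P) = signed_area N (pedal (focus2 a b) P).
Proof.
  intros hb hab HN4 [h Hh] [Hper [Hon [[[t [Ht1 [Ht2 Ht3]]] _] [Hneq [_ [a' [b' [[hb' [hab' Hc]] Htan]]]]]]]].
  assert (ha : 0 < a) by lra. assert (ha' : 0 < a') by lra.
  assert (HN0 : (N <> 0)%nat) by lia.
  assert (HonQ : forall i, qf a b (P i) = 1) by exact Hon.
  set (T := fun k => t (k mod N)%nat + 2 * INR (k / N)%nat * PI).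
  assert (Pper : forall q r, P (r + q * N)%nat = P r).
  { induction q; intro r. f_equal; lia. replace (r + S q * N)%nat with (r + q * N + N)%nat by lia.
    rewrite Hper. auto. }
  assert (PT : forall k, P k = ee a b (T k)).
  { intro k. rewrite (Nat.div_mod_eq k N) at 1. replace (N * (k / N) + k mod N)%nat with (k mod N + (k/N) * N)%nat by lia.
    rewrite Pper. rewrite Ht3 by (apply Nat.mod_upper_bound; auto). unfold ee, T.
    rewrite cos_period, sin_period. auto. }
  assert (T2 : forall k, T (k + N)%nat = T k + 2 * PI).
  { intro k. unfold T. replace (k + N)%nat with (k + 1 * N)%nat by lia.
    rewrite Nat.Div0.mod_add, Nat.div_add by auto. rewrite plus_INR. simpl INR. ring. }
  assert (Tsmall : forall k, (k < N)%nat -> T k = t k).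
  { intros k Hk. unfold T. rewrite Nat.mod_small, Nat.div_small by auto. simpl INR. ring. }
  assert (Tinc : forall k, T k < T (S k)).
  { intro k. induction k as [k IH] using (well_founded_induction Nat.lt_wf_0).
    destruct (Nat.lt_ge_cases k N) as [Hk|Hk].
    - destruct (Nat.lt_ge_cases (S k) N) as [Hk1|Hk1].
      + rewrite !Tsmall by auto. apply Ht1. lia.
      + replace (S k) with (0 + N)%nat by lia. rewrite T2, Tsmall, Tsmall by lia.
        replace k with (N - 1)%nat by lia. auto.
    - replace k with ((k - N) + N)%nat by lia. replace (S (k - N + N)) with (S (k - N) + N)%nat by lia.
      rewrite !T2. specialize (IH (k - N)%nat). assert (T (k - N)%nat < T (S (k - N))) by (apply IH; lia). lra. }
  assert (ML := mono_lt T Tinc).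
  assert (Hout : forall k, exists s0, qf a' b' (lp (P k) (P (S k)) s0) = 1 /\
                     forall s, 1 <= qf a' b' (lp (P k) (P (S k)) s)).
  { intro k. apply tangent_outside; auto. }
  assert (Ha2 : a' ^ 2 < a ^ 2).
  { destruct (Rlt_or_le (a'^2) (a^2)) as [|Hle]; auto. exfalso.
    destruct (Hout 0%nat) as [s0 [_ Ho]]. specialize (Ho (/2)).
    assert (Hb2 : b^2 <= b'^2) by lra.
    pose proof (qf_lp a b (P 0%nat) (P 1%nat) (/2)) as Hq. rewrite !HonQ in Hq.
    pose proof (qf_pos a b _ ha hb (psub_nz _ _ (Hneq 0%nat))) as HD.
    assert (qf a' b' (lp (P 0%nat) (P 1%nat) (/ 2)) <= qf a b (lp (P 0%nat) (P 1%nat) (/ 2))).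
    { destruct (lp (P 0%nat) (P 1%nat) (/ 2)) as [x y]. unfold qf; cbn [fst snd].
      pose proof (div_le (a^2) (a'^2) x ltac:(nra) Hle). pose proof (div_le (b^2) (b'^2) y ltac:(nra) Hb2). lra. }
    lra. }
  assert (Hb2 : b' ^ 2 < b ^ 2) by lra.
  assert (TanP : forall k, Tan a b a' b' (T k) (T (S k))).
  { intro k. destruct (Hout k) as [s0 [H1 _]]. exists s0.
    pose proof (inner a b a' b' _ ha' hb' Ha2 Hb2 H1) as Hi.
    pose proof (qf_lp a b (P k) (P (S k)) s0) as Hq. rewrite !HonQ in Hq.
    pose proof (qf_pos a b _ ha hb (psub_nz _ _ (Hneq k))) as HD.
    assert (0 < s0 * (1 - s0) * qf a b (psub (P (S k)) (P k))) by lra.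
    assert (0 < s0 * (1 - s0)).
    { destruct (Rlt_or_le 0 (s0 * (1 - s0))); auto.
      assert (s0 * (1 - s0) * qf a b (psub (P (S k)) (P k)) <= 0).
      { replace (s0 * (1 - s0) * qf a b (psub (P (S k)) (P k))) with (- ((- (s0 * (1-s0))) * qf a b (psub (P (S k)) (P k)))) by ring.
        assert (0 <= (- (s0 * (1-s0))) * qf a b (psub (P (S k)) (P k))) by (apply Rmult_le_pos; lra). lra. }
      lra. }
    split. split; nra. rewrite <- !PT. exact H1. }
  assert (GoodP : forall k, Good a b a' b' (T k) (T (S k))).
  { intro k. assert (T (S k) < T (k + N)%nat) by (apply ML; lia). rewrite T2 in H. pose proof (Tinc k).
    split. lra. intros Z HZ.
    destruct (Rlt_or_le (ell (ee a b (T k)) (ee a b (T (S k))) Z) 0) as [Hz|Hz]; auto. exfalso.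
    destruct (TanP (S k)) as [s1 [Hs1 HX1]].
    assert (T (S (S k)) < T (k + N)%nat) by (apply ML; lia). rewrite T2 in H1. pose proof (Tinc (S k)).
    assert (E : 0 < ell (ee a b (T k)) (ee a b (T (S k))) (lp (ee a b (T (S k))) (ee a b (T (S (S k)))) s1)).
    { rewrite ell_lp, ell_end.
      assert (0 < ell (ee a b (T k)) (ee a b (T (S k))) (ee a b (T (S (S k))))) by (apply ell_ee_pos; lra).
      assert (0 < s1 * ell (ee a b (T k)) (ee a b (T (S k))) (ee a b (T (S (S k))))) by (apply Rmult_lt_0_compat; lra).
      lra. }
    apply (one_side a' b' (ee a b (T k)) (ee a b (T (S k))) ha' hb') with (Z1 := lp (ee a b (T (S k))) (ee a b (T (S (S k)))) s1) (Z2 := Z); auto.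
    - rewrite <- !PT. apply Hneq.
    - destruct (Hout k) as [s00 [_ Ho]]. intro s. specialize (Ho s). rewrite !PT in Ho. exact Ho. }
  assert (Hsym : forall k, T (k + h)%nat = T k + PI).
  { apply (orbit (Good a b a' b') (Tan a b a' b') (fun x x' y y' => core a b a' b' x x' y y' ha hb) T N h Hh); auto.
    lia. intro k. split. apply Good_sym. apply (GoodP (k+h)%nat). apply Tan_sym. apply (TanP (k+h)%nat). }
  apply (area_sym a b N h P Hh); auto. lia.
  intro k. rewrite !PT, Hsym. apply ee_pPI.
Qed.
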